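(* Let $\alpha>1$ be fixed. For a positive integer $n$ let $A=\{1,2,\dots,2^n\}$, $B=\{1,2,\dots,\lfloor n^{\alpha}\rfloor\}$, let $P_n$ be the set of primes $p\le n^{\alpha}$, and define the family $H(n)=\{h_p:A\to B\}_{p\in P_n}$ by $h_p(a)=(a\bmod p)+1$, where $a\bmod p$ is the remainder of $a$ upon division by $p$. Then for all sufficiently large $n$, the family $H(n)$ is $\frac{\alpha}{n^{\alpha-1}}$-almost universal.
   Context: A family $\{h_p:X\to Y\}_{p\in P}$ indexed by a finite set $P$ is $\varepsilon$-almost universal if for all distinct $x_1,x_2\in X$, $|\{p\in P : h_p(x_1)=h_p(x_2)\}|\le\varepsilon|P|$; equivalently, for $p$ drawn uniformly from $P$, $\Pr[h_p(x_1)=h_p(x_2)]\le\varepsilon$. *)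

(* Defs.v *)
From mathcomp Require Import all_boot all_order all_algebra.
From mathcomp Require Import reals exp.
Set Implicit Arguments. Unset Strict Implicit. Unset Printing Implicit Defensive.
Import Order.TTheory GRing.Theory Num.Theory.
Local Open Scope ring_scope.

Definition almost_universal (R : realType) (X : pred nat) (P : seq nat)
  (h : nat -> nat -> nat) (eps : R) : Prop :=
  forall x1 x2 : nat, x1 \in X -> x2 \in X -> x1 != x2 ->
    (count (fun p => h p x1 == h p x2) P)%:R <= eps * (size P)%:R.

Definition domA (n : nat) : pred nat := fun a => (1 <= a <= 2 ^ n)%N.

(* P_n = primes p <= n^alpha (listed increasingly; the iota bound only
   ensures finiteness, since p <= n^alpha implies p <= floor(n^alpha)). *)
Definition primesP (R : realType) (alpha : R) (n : nat) : seq nat :=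
  [seq p <- iota 0 (Num.truncn (powR (n%:R : R) alpha)).+1
     | prime p && ((p%:R : R) <= powR (n%:R : R) alpha)].

Definition hmod (p a : nat) : nat := ((a %% p) + 1)%N.

(* Main.v *)
Require Import Defs.
From mathcomp Require Import all_boot all_order all_algebra.
From mathcomp Require Import reals exp.
From mathcomp Require Import zify ring lra.
Import Order.TTheory GRing.Theory Num.Theory.

Lemma floor_comb (A : nat) :
  (A%/2 + A%/3 + A%/5 <= A + A%/30 <= A%/2 + A%/3 + A%/5 + (0 < A))%N.
Proof. apply/andP; split; lia. Qed.

Lemma legendre_ext p a B : prime p -> (a <= B)%N ->
  logn p a`! = (\sum_(1 <= k < B.+1) a %/ p ^ k)%N.
Proof.
move=> pp aB; rewrite logn_fact // [RHS](@big_cat_nat _ _ _ a.+1) //=.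
rewrite [X in (_ + X)%N]big1_seq ?addn0 // => k /andP[_]; rewrite mem_index_iota => /andP[ak _].
apply: divn_small; apply: leq_trans ak _; apply: ltnW; exact: ltn_expl (prime_gt1 pp).
Qed.

Definition Fm m := ((30 * m)`! * m`!)%N.
Definition Dm m := ((15 * m)`! * (10 * m)`! * (6 * m)`!)%N.

Lemma Fm_def m : Fm m = ((30 * m)`! * m`!)%N. Proof. by []. Qed.
Lemma Dm_def m : Dm m = ((15 * m)`! * (10 * m)`! * (6 * m)`!)%N. Proof. by []. Qed.
Opaque Fm Dm.

Lemma Fm_gt0 m : (0 < Fm m)%N. Proof. by rewrite Fm_def muln_gt0 !fact_gt0. Qed.
Lemma Dm_gt0 m : (0 < Dm m)%N. Proof. by rewrite Dm_def !muln_gt0 !fact_gt0. Qed.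

Lemma logn_Fm p m : prime p ->
  logn p (Fm m) = (\sum_(1 <= k < (30 * m).+1) (30 * m %/ p^k + m %/ p^k))%N.
Proof.
move=> pp; rewrite Fm_def lognM ?fact_gt0 // big_split /=.
by rewrite !(@legendre_ext p _ (30 * m)) //; lia.
Qed.

Lemma logn_Dm p m : prime p ->
  logn p (Dm m) = (\sum_(1 <= k < (30 * m).+1) (15 * m %/ p^k + 10 * m %/ p^k + 6 * m %/ p^k))%N.
Proof.
move=> pp; rewrite Dm_def !lognM ?muln_gt0 ?fact_gt0 // !big_split /=.
by rewrite !(@legendre_ext p _ (30 * m)) //; lia.
Qed.

Lemma floor_k m q : (0 < q)%N ->
  let A := (30 * m %/ q)%N in
  [/\ (15 * m %/ q = A %/ 2)%N, (10 * m %/ q = A %/ 3)%N, (6 * m %/ q = A %/ 5)%N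
    & (m %/ q = A %/ 30)%N].
Proof.
move=> q0 A; rewrite /A -!divnMA.
have h c d : (0 < c)%N -> (d * m %/ q = (d * c) * m %/ (q * c))%N.
  by move=> c0; rewrite -mulnA [(c * m)%N]mulnC mulnA divnMr.
by split; [rewrite (h 2) | rewrite (h 3) | rewrite (h 5) | rewrite -{1}(mul1n m) (h 30)].
Qed.

Lemma sum_ind K t : (\sum_(1 <= k < K.+1) (k <= t) <= t)%N.
Proof.
suff : (\sum_(1 <= k < K.+1) (k <= t) <= minn K t)%N by move=> h; apply: leq_trans h (geq_minr _ _).
elim: K => [|K IH]; first by rewrite big_geq.
rewrite big_nat_recr //=; have [h|h] := leqP K.+1 t.
  by  apply: leq_trans (leq_add IH (leqnn 1)) _; lia.
by rewrite addn0; apply: leq_trans IH _; lia.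
Qed.

Lemma logn_bounds p m : prime p -> (0 < m)%N ->
  (logn p (Dm m) <= logn p (Fm m) <= logn p (Dm m) + trunc_log p (30 * m))%N.
Proof.
move=> pp m0; rewrite logn_Fm // logn_Dm //; apply/andP; split.
  apply: leq_sum => k _; have q0 : (0 < p ^ k)%N by rewrite expn_gt0 prime_gt0.
  have [h1 h2 h3 h4] := floor_k m (p ^ k) q0.
  rewrite h1 h2 h3 h4; have := floor_comb (30 * m %/ p ^ k); lia.
apply: leq_trans (_ : _ <= \sum_(1 <= k < (30 * m).+1)
     ((15 * m %/ p ^ k + 10 * m %/ p ^ k + 6 * m %/ p ^ k) + (k <= trunc_log p (30 * m))))%N _.
  apply: leq_sum => k _; have q0 : (0 < p ^ k)%N by rewrite expn_gt0 prime_gt0.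
  have [h1 h2 h3 h4] := floor_k m (p ^ k) q0.
  have hk : (0 < 30 * m %/ p ^ k)%N -> (k <= trunc_log p (30 * m))%N.
    by rewrite divn_gt0 ?expn_gt0 ?prime_gt0 // => h; apply: trunc_log_max => //; exact: prime_gt1.
  rewrite h1 h2 h3 h4; have := floor_comb (30 * m %/ p ^ k).
  case: (0 < 30 * m %/ p ^ k)%N hk => [-> //|_]; lia.
by rewrite big_split /= leq_add2l sum_ind.
Qed.


Definition piN N := count prime (iota 0 N.+1).

Lemma count_primes_le K N :
  (count (fun p => prime p && (p <= N)) (iota 0 K) <= piN N)%N.
Proof.
rewrite /piN -!size_filter; apply: uniq_leq_size; first by rewrite filter_uniq // iota_uniq.
move=> x; rewrite !mem_filter !mem_iota /= => /andP[/andP[px xN] _].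
by rewrite px /= ltnS xN.
Qed.

Lemma prod_if_const (r : seq nat) (P : pred nat) c :
  (\prod_(i <- r) (if P i then c else 1) = c ^ count P r)%N.
Proof.
elim: r => [|x r IH]; first by rewrite big_nil.
by rewrite big_cons IH /=; case: (P x); rewrite ?expnS ?mul1n.
Qed.

Lemma D_dvd_F m : (0 < m)%N -> (Dm m %| Fm m)%N.
Proof.
move=> m0; apply/(dvdn_partP _ (Dm_gt0 m)) => p.
rewrite mem_primes => /andP[pp _]; rewrite p_part pfactor_dvdn ?Fm_gt0 //.
by case/andP: (logn_bounds p m pp m0).
Qed.

Lemma F_upper m : (0 < m)%N -> (Fm m <= Dm m * (30 * m) ^ piN (30 * m))%N.
Proof.
move=> m0; set M := (Fm m + Dm m + 30 * m)%N.
have hF : (Fm m <= M)%N by apply: leq_trans (leq_addr (Dm m) _) (leq_addr _ _).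
have hD : (Dm m <= M)%N by apply: leq_trans (leq_addl (Fm m) _) (leq_addr _ _).
rewrite -{1}(partnT (Fm_gt0 m)) -{1}(partnT (Dm_gt0 m)) (widen_partn _ hF) (widen_partn _ hD).
apply: leq_trans (_ : _ <= \prod_(0 <= p < M.+1 | p \in predT)
   (p ^ logn p (Dm m) * (if prime p && (p <= 30 * m) then 30 * m else 1)))%N _.
  apply: leq_prod => p _.
  case pp: (prime p); last first.
    have h0 q : logn p q = 0%N by rewrite lognE pp.
    by rewrite !h0 expn0 mul1n.
  
  have [_ /(leq_pexp2l (prime_gt0 pp))] := andP (logn_bounds p m pp m0).
  rewrite expnD => h; apply: leq_trans h _; rewrite leq_mul2l; apply/orP; right.
  
  have h1 : (p ^ trunc_log p (30 * m) <= 30 * m)%N.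
    by apply: trunc_logP; [exact: prime_gt1 | rewrite muln_gt0 m0].
  have [hp|hp] := leqP p (30 * m); first by [].
  suff -> : trunc_log p (30 * m) = 0%N by [].
  have : (p ^ trunc_log p (30 * m) < p ^ 1)%N by rewrite expn1; exact: leq_ltn_trans h1 hp.
  by rewrite ltn_exp2l ?prime_gt1 // ltnS leqn0 => /eqP.
rewrite big_split /= leq_mul2l; apply/orP; right.
rewrite (eq_bigl (fun _ => true)) // prod_if_const; apply: leq_pexp2l; first by rewrite muln_gt0 m0.
by rewrite /index_iota subn0; apply: (count_primes_le M.+1 (30 * m)).
Qed.


Lemma factD a k : ((a + k)`! = a`! * \prod_(i < k) (a + i.+1))%N.
Proof.
elim: k => [|k IH]; first by rewrite big_ord0 addn0 muln1.
by rewrite big_ord_recr /= addnS factS IH mulnCA; congr (_ * _); rewrite mulnC.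
Qed.

Lemma prod_ge k a c : (c <= a.+1)%N -> (c ^ k <= \prod_(i < k) (a + i.+1))%N.
Proof.
move=> h; elim: k => [|k IH]; first by rewrite big_ord0.
rewrite big_ord_recr /= expnSr; apply: leq_mul IH _; apply: leq_trans h _; lia.
Qed.



Lemma prod_le k a : (\prod_(i < k) (a + i.+1) <= (a + k) ^ k)%N.
Proof.
elim: k => [|k IH]; first by rewrite big_ord0.
rewrite big_ord_recr /= expnSr; apply: leq_mul; last lia.
apply: leq_trans IH _; case: k => [|k]; first by rewrite !expn0.
by rewrite leq_exp2r // !addnS ltnW.
Qed.

Lemma bern k m : (k <= m)%N -> ((m.+1) ^ k * (m - k) <= m ^ k.+1)%N.
Proof.
elim: k => [|k IH] h; first by rewrite expn0 mul1n subn0 expn1.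
have h' : (k <= m)%N by apply: ltnW.
apply: leq_trans (_ : _ <= (m.+1)^k * (m * (m - k)))%N _.
  rewrite expnSr -mulnA leq_mul2l; apply/orP; right.
  have -> : (m - k = (m - k.+1).+1)%N by rewrite subnS prednK // subn_gt0.
  by rewrite mulSn mulnS leq_add2r leq_subr.
by rewrite mulnCA [X in (_ <= X)%N]expnS leq_mul2l (IH h') orbT.
Qed.

Lemma half_bern m : (60 <= m)%N -> ((m.+1) ^ 30 <= 2 * m ^ 30)%N.
Proof.
move=> h; have := bern 30 m (leq_trans (isT : (30 <= 60)%N) h); rewrite [m ^ 31]expnS => hb.
have m0 : (0 < m)%N by apply: leq_trans h.
rewrite -(leq_pmul2r m0); apply: leq_trans (_ : _ <= (m.+1)^30 * (2 * (m - 30)))%N _.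
  by rewrite leq_mul2l; apply/orP; right; lia.
have -> : ((m.+1)^30 * (2 * (m - 30)) = 2 * ((m.+1)^30 * (m - 30)))%N by ring.
have -> : (2 * m ^ 30 * m = 2 * (m * m ^ 30))%N by ring.
by rewrite leq_mul2l hb orbT.
Qed.


Definition Pc c m := (\prod_(i < c) (c * m + i.+1))%N.

Lemma Pc_up c m : (Pc c m <= c ^ c * m.+1 ^ c)%N.
Proof. by apply: leq_trans (prod_le _ _) _; rewrite -expnMn mulnS addnC. Qed.

Lemma Pc_low c m : ((c * m) ^ c <= Pc c m)%N.
Proof. by apply: prod_ge. Qed.

Lemma key_ratio m : (60 <= m)%N ->
  (2^38 * (Pc 15 m * Pc 10 m * Pc 6 m) <= Pc 30 m * m.+1)%N.
Proof.
move=> h.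
apply: leq_trans (_ : _ <= 2^38 * ((15^15 * m.+1^15) * (10^10 * m.+1^10) * (6^6 * m.+1^6)))%N _.
  by rewrite leq_mul2l; apply/orP; right; rewrite !leq_mul ?Pc_up.
apply: leq_trans (_ : _ <= (30 * m) ^ 30 * m.+1)%N _; last by rewrite leq_mul2r Pc_low orbT.
have e (a b c d x : nat) : (a * ((b^15 * x^15) * (c^10 * x^10) * (d^6 * x^6))
   = (a * b^15 * c^10 * d^6) * (x^30 * x))%N by ring.
rewrite [X in (X <= _)%N]e.
apply: leq_trans (_ : _ <= (2^38 * 15^15 * 10^10 * 6^6) * (2 * m^30 * m.+1))%N _.
  by rewrite leq_mul2l leq_mul2r half_bern ?orbT.
have e2 (a x y : nat) : ((a * x) ^ 30 * y = a^30 * (x^30 * y))%N by ring.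
have e3 (a b c d x y : nat) : ((a * b * c * d) * (2 * x * y) = (a * 2 * b * c * d) * (x * y))%N by ring.
rewrite [X in (_ <= X)%N]e2 [X in (X <= _)%N]e3.
by rewrite leq_mul2r; apply/orP; right; lia.
Qed.

Lemma Fm_S m : Fm m.+1 = ((30 * m)`! * Pc 30 m * (m.+1 * m`!))%N.
Proof. by rewrite Fm_def mulnS addnC factD factS. Qed.

Lemma Dm_S m : Dm m.+1 = ((15 * m)`! * Pc 15 m * ((10 * m)`! * Pc 10 m) * ((6 * m)`! * Pc 6 m))%N.
Proof. by rewrite Dm_def !mulnS ![(_ + _ * m)%N]addnC !factD. Qed.

Lemma ratio m : (60 <= m)%N -> (2^38 * (Fm m * Dm m.+1) <= Fm m.+1 * Dm m)%N.
Proof.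
move=> h; rewrite Fm_S Dm_S Fm_def Dm_def.
have e1 (K f g a b c p q r : nat) : (K * ((f * g) * ((a * p) * (b * q) * (c * r)))
   = (f * g * a * b * c) * (K * (p * q * r)))%N by ring.
have e2 (f g a b c p x : nat) : ((f * p * (x * g)) * (a * b * c) = (f * g * a * b * c) * (p * x))%N by ring.
rewrite [X in (X <= _)%N]e1 [X in (_ <= X)%N]e2 leq_mul2l key_ratio ?orbT //.
Qed.


Lemma iter_ratio j : (2^(38*j) * (Fm 60 * Dm (60+j)) <= Fm (60+j) * Dm 60)%N.
Proof.
elim: j => [|j IH]; first by rewrite muln0 expn0 mul1n addn0 leqnn.
rewrite addnS -(leq_pmul2r (Dm_gt0 (60 + j))) mulnS expnD.
set a := (60 + j)%N.
have e1 (K L f d1 d0 : nat) : (K * L * (f * d1) * d0 = K * d1 * (L * (f * d0)))%N by ring.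
rewrite [X in (X <= _)%N]e1; apply: leq_trans (_ : _ <= 2^38 * Dm a.+1 * (Fm a * Dm 60))%N _.
  by rewrite leq_mul2l IH orbT.
have e2 (K d1 f d60 : nat) : (K * d1 * (f * d60) = d60 * (K * (f * d1)))%N by ring.
have e3 (f1 d60 d : nat) : (f1 * d60 * d = d60 * (f1 * d))%N by ring.
rewrite [X in (X <= _)%N]e2 [X in (_ <= X)%N]e3 leq_mul2l ratio ?orbT // /a leq_addr.
Qed.

Lemma cheb_pow m : (60 <= m)%N -> (2^(38 * (m - 60)) <= (30 * m) ^ piN (30 * m))%N.
Proof.
move=> h.
have m0 : (0 < m)%N by apply: leq_trans h.
have h4 : (Dm 60 <= Fm 60)%N by apply: dvdn_leq; [exact: Fm_gt0 | exact: D_dvd_F].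
have h3 : (2^(38 * (m - 60)) * Fm 60 <= (30 * m) ^ piN (30 * m) * Dm 60)%N.
  have h1 := iter_ratio (m - 60); rewrite subnKC in h1; last exact: h.
  have h2 := @F_upper m m0.
  rewrite -(leq_pmul2r (Dm_gt0 m)); apply: leq_trans (_ : _ <= Fm m * Dm 60)%N _.
    rewrite -mulnA; exact: h1.
  rewrite mulnAC leq_mul2r; apply/orP; right; rewrite mulnC; exact: h2.
rewrite -(leq_pmul2r (Dm_gt0 60)); apply: leq_trans _ h3; exact: leq_mul (leqnn _) h4.
Qed.

Lemma cheb m : (60 <= m)%N ->
  (38 * (m - 60) <= (trunc_log 2 (30 * m)).+1 * piN (30 * m))%N.
Proof.
move=> h; have h5 := @cheb_pow m h.
have m0 : (0 < 30 * m)%N by rewrite muln_gt0; apply: leq_trans h.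
have h6 : (30 * m <= 2 ^ (trunc_log 2 (30 * m)).+1)%N.
  apply: ltnW; exact: trunc_log_ltn.
have h7 : ((30 * m) ^ piN (30 * m) <= 2 ^ ((trunc_log 2 (30 * m)).+1 * piN (30 * m)))%N.
  rewrite expnM; case: (piN (30 * m)) => [|k]; first by rewrite !expn0.
  by rewrite leq_exp2r.
rewrite -(leq_exp2l _ _ (isT : (1 < 2)%N)); exact: leq_trans h5 h7.
Qed.

Lemma count_split (T : eqType) (a b : pred T) (s : seq T) :
  count a s = (count (fun x => a x && b x) s + count (fun x => a x && ~~ b x) s)%N.
Proof.
elim: s => [//|x s IH] /=; rewrite IH.
by case: (a x); case: (b x) => /=; rewrite ?add0n ?addn0 ?addnS ?addSn.
Qed.

Lemma prod_primes_dvd (Q : seq nat) d : uniq Q -> all prime Q ->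
  (forall p, p \in Q -> p %| d) -> (\prod_(p <- Q) p %| d)%N.
Proof.
elim: Q => [|p Q IH] /=; first by rewrite big_nil dvd1n.
move=> /andP[pQ uQ] /andP[pp aQ] hd; rewrite big_cons.
have cop : coprime p (\prod_(q <- Q) q).
  rewrite prime_coprime //; apply/negP; rewrite Euclid_dvd_prod // big_has => /hasP[q qQ pq].
  have qp : prime q by move/allP: aQ => /(_ q qQ).
  by move: pq; rewrite dvdn_prime2 // => /eqP epq; move: pQ; rewrite epq qQ.
rewrite Gauss_dvd // hd ?mem_head //= IH // => q qQ; apply: hd; rewrite in_cons qQ orbT.
by [].
Qed.

Lemma prod_ge_seq (Q : seq nat) c : (forall x, x \in Q -> c <= x)%N ->
  (c ^ size Q <= \prod_(x <- Q) x)%N.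
Proof.
elim: Q => [|x Q IH] h /=; first by rewrite big_nil.
rewrite big_cons expnS leq_mul ?h ?mem_head // IH // => y yQ; apply: h; rewrite in_cons yQ orbT //.
Qed.

Lemma count_div_bound (P : seq nat) d n s : uniq P -> all prime P -> (0 < d)%N ->
  (d < 2 ^ n)%N -> (0 < s)%N ->
  (count (fun p => p %| d) P <= 2 ^ s + n %/ s)%N.
Proof.
move=> uP aP d0 dn s0; rewrite (count_split _ _ (fun p => p < 2 ^ s)%N); apply: leq_add.
  rewrite -size_filter; apply: leq_trans (_ : _ <= size (iota 0 (2^s)))%N _; last by rewrite size_iota.
  apply: uniq_leq_size; first by rewrite filter_uniq.
  by move=> x; rewrite mem_filter mem_iota /= => /andP[/andP[_ ->] _].
rewrite -size_filter leq_divRL //.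
set Q := filter _ P.
have uQ : uniq Q by rewrite filter_uniq.
have aQ : all prime Q by rewrite all_filter; apply/allP => x xP; apply/implyP => _; move/allP: aP; apply.
have dQ : (\prod_(p <- Q) p %| d)%N.
  apply: prod_primes_dvd => // p; rewrite mem_filter /= => /andP[/andP[] //].
have h1 : (2 ^ (s * size Q) <= d)%N.
  rewrite expnM; apply: leq_trans (dvdn_leq d0 dQ).
  by apply: prod_ge_seq => x; rewrite mem_filter /= -leqNgt => /andP[/andP[_ ->]].
have : (2 ^ (s * size Q) < 2 ^ n)%N by apply: leq_ltn_trans h1 dn.
by rewrite ltn_exp2l // mulnC => /ltnW.
Qed.


Lemma pow_big u : (480 * (u + 14) + 510 <= 2 ^ (u + 14))%N.
Proof.
elim: u => [|u IH]; first by rewrite add0n; lia.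
rewrite addSn expnS; lia.
Qed.

Lemma final_nat L n : (224 <= L)%N -> (2 ^ L <= n)%N ->
  (30 * (L + 2) * (2 ^ (L - L %/ 16) + n %/ (L - L %/ 16)) + 38 * 1830 <= 38 * n)%N.
Proof.
move=> hL hn; set s := (L - L %/ 16)%N.
have s0 : (0 < s)%N by rewrite /s; lia.
have ha : (30 * (L + 2) <= 34 * s)%N by rewrite /s; lia.
have hb : (30 * (L + 2) * (n %/ s) <= 34 * n)%N.
  apply: leq_trans (_ : _ <= 34 * s * (n %/ s))%N _; first by rewrite leq_mul2r ha orbT.
  by rewrite -mulnA leq_mul2l [(s * _)%N]mulnC leq_trunc_div orbT.
have hc : (30 * (L + 2) <= 2 ^ (L %/ 16))%N.
  have := pow_big (L %/ 16 - 14); rewrite subnK; last by lia.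
  move=> h; apply: leq_trans h; lia.
have hd : (30 * (L + 2) * 2 ^ s <= n)%N.
  apply: leq_trans hn; apply: leq_trans (_ : _ <= 2 ^ (L %/ 16) * 2 ^ s)%N _.
    by rewrite leq_mul2r hc orbT.
  by rewrite -expnD /s subnKC // leq_div.
have he : (38 * 1830 <= n)%N.
  apply: leq_trans hn; apply: leq_trans (_ : _ <= 2 ^ 17)%N _; first by [].
  by apply: leq_pexp2l => //; lia.
rewrite mulnDr; lia.
Qed.

Local Open Scope ring_scope.

Lemma piN_mono a b : (a <= b)%N -> (piN a <= piN b)%N.
Proof.
move=> ab; rewrite /piN -(subnKC ab) -addSn iotaD count_cat; exact: leq_addr.
Qed.

Lemma hmod_count (P : seq nat) x1 x2 : (x1 <= x2)%N ->
  count (fun p => hmod p x1 == hmod p x2) P = count (fun p => p %| x2 - x1)%N P.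
Proof.
move=> h; apply: eq_count => p; rewrite /hmod eqn_add2r.
by rewrite eq_sym -/(x2 == x1 %[mod p])%N eqn_mod_dvd.
Qed.

Lemma size_primesP (R : realType) (alpha : R) n :
  size (primesP alpha n) = piN (Num.truncn (powR (n%:R : R) alpha)).
Proof.
rewrite /primesP size_filter /piN; apply: eq_in_count => p; rewrite mem_iota /= ltnS => hp.
case: (prime p) => //=; rewrite -truncn_ge_nat //; exact: powR_ge0.
Qed.

Lemma primesP_ok (R : realType) (alpha : R) n :
  uniq (primesP alpha n) /\ all prime (primesP alpha n).
Proof.
split; first by rewrite filter_uniq // iota_uniq.
by apply/allP => p; rewrite mem_filter => /andP[/andP[-> _] _].
Qed.

Theorem lemma4 (R : realType) (alpha : R) (halpha : 1 < alpha) :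
  exists N : nat, forall n : nat, (N <= n)%N ->
    almost_universal (domA n) (primesP alpha n) hmod
      (alpha / powR (n%:R : R) (alpha - 1)).
Proof.
exists (2 ^ 224)%N => n hN.
have h1800 : (1800 <= n)%N.
  apply: leq_trans hN; apply: leq_trans (_ : _ <= 2 ^ 11)%N _; first by []. by apply: leq_pexp2l.
have n0 : (0 < n)%N by apply: leq_trans h1800.
have hL : (224 <= trunc_log 2 n)%N by apply: trunc_log_max.
have hLn : (2 ^ trunc_log 2 n <= n)%N by apply: trunc_logP.
have hnL : (n < 2 ^ (trunc_log 2 n).+1)%N by apply: trunc_log_ltn.
clear hN; move: hL hLn hnL; move: (trunc_log 2 n) => L hL hLn hnL.
have s0 : (0 < L - L %/ 16)%N by move: hL; clear; lia.
move: (L - L %/ 16)%N s0 (@final_nat L n hL hLn) => s s0 hfin.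
pose x := powR (n%:R : R) alpha.
pose z := powR (n%:R : R) (alpha - 1).
have nR1 : 1 <= (n%:R : R) by rewrite ler1n.
have z1 : 1 <= z.
  have h := @ler_powR R _ nR1 0 (alpha - 1); rewrite powRr0 in h; apply: h.
  rewrite subr_ge0; exact: ltW.
have xnz : x = n%:R * z.
  rewrite /x /z mulr_powRB1 //.
  exact: (lt_trans ltr01 halpha).
have x0 : 0 <= x by apply: powR_ge0.
move Xdef : (Num.truncn x) => X.
have hXx : (X%:R : R) <= x by rewrite -Xdef truncn_le.
have hxX : x < X.+1%:R by rewrite -Xdef; apply: truncnS_gt.
have hnX : (n <= X)%N.
  rewrite -Xdef truncn_ge_nat // xnz -[X in X <= _](mulr1 (n%:R)).
  apply: ler_wpM2l; [exact: le_trans ler01 nR1 | exact: z1].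
move mdef : (X %/ 30)%N => m.
have hm60 : (60 <= m)%N by rewrite -mdef; move: hnX h1800; clear; lia.
have hXm : (X < 30 * m + 30)%N by rewrite -mdef; clear; lia.
have h30m : (30 * m <= X)%N by rewrite -mdef mulnC leq_trunc_div.
have m0' : (0 < 30 * m)%N by rewrite muln_gt0; apply: leq_trans hm60.
have hpi := @piN_mono _ _ h30m.
have := @cheb m hm60; have := trunc_logP (isT : (1 < 2)%N) m0'.
move: (trunc_log 2 (30 * m)) => T hT2 hcheb.
have l2 : 0 < ln (2:R) by apply: ln_gt0; rewrite ltr1n.
have n0R : 0 < (n%:R : R) by rewrite ltr0n.
have hT : (T%:R : R) <= alpha * (L.+1)%:R.
  have e1 : (2:R) ^+ T <= x.
    apply: le_trans hXx; rewrite -natrX ler_nat; apply: leq_trans hT2 h30m.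
  have e2 : (n%:R : R) <= (2:R) ^+ L.+1 by rewrite -natrX ler_nat ltnW.
  have p2 : forall k, 0 < (2:R) ^+ k by move=> k; apply: exprn_gt0; rewrite ltr0n.
  have x0' : 0 < x by apply: lt_le_trans e1.
  rewrite -ler_ln ?posrE // lnXn ?ltr0n // /x ln_powR in e1.
  rewrite -ler_ln ?posrE // lnXn ?ltr0n // in e2.
  rewrite -[ln 2 *+ T]mulr_natl in e1; rewrite -[ln 2 *+ L.+1]mulr_natl in e2.
  rewrite -(ler_pM2r l2); apply: le_trans e1 _.
  rewrite -mulrA; apply: ler_wpM2l; last exact: e2.
  by apply: ltW; apply: lt_trans halpha; rewrite ltr01.
have hsize := @size_primesP R alpha n; rewrite -/x Xdef in hsize.
have [uP aP] := @primesP_ok R alpha n.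
move: (primesP alpha n) hsize uP aP => P hsize uP aP.
have z0 : 0 < z by apply: lt_le_trans z1; rewrite ltr01.
have a0 : 0 <= alpha by apply: ltW; apply: lt_trans halpha; rewrite ltr01.
have key : ((2 ^ s + n %/ s)%N%:R : R) * z <= alpha * (size P)%:R.
  move: (2 ^ s + n %/ s)%N hfin => K hfin.
  have A : (30 * (L + 2) * K + 38 * 1830)%N%:R * z <= (38 * n)%N%:R * z.
    by apply: ler_wpM2r; [exact: ltW | rewrite ler_nat].
  rewrite natrD !natrM in A.
  have D : (X.+1%:R : R) <= 30 * m%:R + 30.
    have : (X.+1 <= 30 * m + 30)%N by exact: hXm.
    by rewrite -(ler_nat R) natrD natrM.
  have E0 : (38 * (m - 60) <= T.+1 * size P)%N.
    apply: leq_trans hcheb _; rewrite hsize leq_mul2l hpi orbT //.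
  have E : 38 * (m%:R - 60) <= (T%:R + 1) * (size P)%:R :> R.
    by move: E0; rewrite -(ler_nat R) !natrM natrB // -[T.+1%:R]natr1.
  have E2 : (T%:R + 1) * (size P)%:R <= alpha * (L + 2)%:R * (size P)%:R :> R.
    apply: ler_wpM2r; first exact: ler0n.
    rewrite addn2 -[L.+2%:R]natr1 mulrDr mulr1.
    by apply: lerD; [exact: hT | exact: ltW].
  have lr0 : 0 < ((L + 2)%N%:R : R) by rewrite ltr0n addn2.
  rewrite -(ler_pM2l lr0).
  rewrite xnz in hxX.
  move: A D E E2 hxX z1; rewrite !mulrA.
  move=> h1 h2 h3 h4 h5 h6; clear -h1 h2 h3 h4 h5 h6; lra.
move=> x1 x2 hx1 hx2 hne.
wlog lt12 : x1 x2 hx1 hx2 hne / (x1 < x2)%N.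
  move=> H; case: (ltngtP x1 x2) => h12; first exact: H.
    rewrite (@eq_count _ _ (fun p => hmod p x2 == hmod p x1)); last by move=> p; rewrite eq_sym.
    by apply: H => //; rewrite eq_sym.
  by rewrite h12 eqxx in hne.
rewrite (@hmod_count P x1 x2 (ltnW lt12)).
move: hx1 hx2; rewrite !unfold_in /domA => /andP[a1 b1] /andP[a2 b2].
have d0 : (0 < x2 - x1)%N by rewrite subn_gt0.
have d2 : (x2 - x1 < 2 ^ n)%N by move: a1 b2 lt12; clear; lia.
have hc := @count_div_bound P (x2 - x1) n s uP aP d0 d2 s0.
apply: le_trans (_ : ((2 ^ s + n %/ s)%N%:R : R) <= _); first by rewrite ler_nat.
rewrite -/z mulrAC ler_pdivlMr //.
Qed.
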